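(* Let $(G,\ell,\mathcal{C})$ be a triplet, let $k,q_1,q_2$ be nonnegative integers, and let $q'=2^{k\cdot q_2}\cdot q_1+1$. Suppose $C_1,C_2,\ldots,C_{q'}\subseteq V(G)$ are pairwise disjoint vertex sets, each of size at most $k$, which pairwise have the same type in $(G,\ell,\mathcal{C})$. Let $\phi$ be an MSO formula in prenex form with $q_1$ vertex (FO) quantifiers and $q_2$ set (MSO) quantifiers. Then $G,\ell,\mathcal{C}\models\phi$ if and only if $G\setminus C_1,\ell,\mathcal{C}_1\models\phi$, where $\mathcal{C}_1$ is the restriction of $\mathcal{C}$ to $V(G)\setminus C_1$.
   Context: Graphs are finite and simple. There are vertex constants $u_1,u_2,\ldots$ and set constants $D_1,D_2,\ldots$, vertex variables $x_1,x_2,\ldots$ and set variables $X_1,X_2,\ldots$. A triplet $(G,\ell,\mathcal{C})$ consists of a graph $G$, a partial function $\ell$ (labeling) from vertex constants to $V(G)$, and a partial function $\mathcal{C}$ (coloring) from set constants to subsets of $V(G)$. MSO formulas are generated by $\phi\to\exists X.\phi\mid\exists x.\phi\mid\phi\lor\phi\mid\neg\phi\mid y\sim y\mid y=y\mid y\in Y$, where $y$ is a vertex variable or vertex constant and $Y$ a set variable or set constant. Semantics: $G,\ell,\mathcal{C}\models u_i\in D_j$ iff $\ell(u_i)$ is defined and $\ell(u_i)\in\mathcal{C}(D_j)$ (with $\mathcal{C}(D_j)$ defined); $u_i=u_j$ iff both are defined and $\ell(u_i)=\ell(u_j)$; $u_i\sim u_j$ iff both defined and $\ell(u_i)\ell(u_j)\in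 E(G)$; $\lor,\neg$ as usual; $G,\ell,\mathcal{C}\models\exists x_i.\phi$ iff there is $v\in V(G)$ such that $G,\ell',\mathcal{C}\models\phi[x_i\setminus u_i]$, where $\ell(u_i)$ is undefined, $\phi[x_i\setminus u_i]$ replaces every occurrence of $x_i$ by $u_i$, and $\ell'$ agrees with $\ell$ except $\ell'(u_i)=v$; similarly $G,\ell,\mathcal{C}\models\exists X_i.\phi$ iff there is $S\subseteq V(G)$ such that $G,\ell,\mathcal{C}'\models\phi[X_i\setminus D_i]$ where $\mathcal{C}(D_i)$ is undefined and $\mathcal{C}'$ agrees with $\mathcal{C}$ except $\mathcal{C}'(D_i)=S$. Otherwise the formula is not satisfied. Prenex form: all quantifiers at the beginning. An isomorphism between triplets $(G_1,\ell_1,\mathcal{C}_1)$ and $(G_2,\ell_2,\mathcal{C}_2)$ is a bijection $f:V(G_1)\to V(G_2)$ preserving adjacency and non-adjacency such that for every $u_i$ either both $\ell_1(u_i),\ell_2(u_i)$ are undefined or $f(\ell_1(u_i))=\ell_2(u_i)$, and for every $D_i$ either both $\mathcal{C}_1(D_i),\mathcal{C}_2(D_i)$ are undefined or $f(\mathcal{C}_1(D_i))=\mathcal{C}_2(D_i)$. Two sets $C_1,C_2\subseteq V(G)$ have the same type in $(G,\ell,\mathcal{C})$ if there is an isomorphism $f$ from $(G,\ell,\mathcal{C})$ to itself mapping elements of $C_1$ to $C_2$, elements of $C_2$ to $C_1$, and every vertex of $V(G)\setminus(C_1\cup C_2)$ to itself. The restriction of $\mathcal{C}$ to $V(G)\setminus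 C_1$ is the coloring $\mathcal{C}_1$ with $\mathcal{C}_1(D_i)=\mathcal{C}(D_i)\setminus C_1$ whenever $\mathcal{C}(D_i)$ is defined, and undefined otherwise. *)

(* Defs.v *)
From mathcomp Require Import all_boot.
Set Implicit Arguments. Unset Strict Implicit. Unset Printing Implicit Defensive.

(* A triplet (G, l, C) over an ambient finite type T of potential vertices:
   V(G) = tV, adjacency tE (only its restriction to tV matters),
   labeling tl : vertex constants u_i -> option vertex,
   coloring tc : set constants D_i -> option vertex set. *)
Record triplet (T : finType) := Triplet {
  tV : {set T};
  tE : rel T;
  tl : nat -> option T;
  tc : nat -> option {set T} }.

Definition wf_triplet (T : finType) (t : triplet T) : Prop :=
  (forall x y, tE t x y = tE t y x) /\ (forall x, ~~ tE t x x) /\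
  (forall i v, tl t i = Some v -> v \in tV t) /\
  (forall i S, tc t i = Some S -> S \subset tV t).

Inductive vterm := VVar of nat | VCon of nat.
Inductive sterm := SVar of nat | SCon of nat.
Inductive mso :=
| ExV of nat & mso
| ExS of nat & mso
| Or of mso & mso
| Not of mso
| Adj of vterm & vterm
| Eqv of vterm & vterm
| Mem of vterm & sterm.

Definition substVt (i : nat) (y : vterm) : vterm :=
  match y with VVar j => if j == i then VCon i else y | _ => y end.
Definition substSt (i : nat) (Y : sterm) : sterm :=
  match Y with SVar j => if j == i then SCon i else Y | _ => Y end.

Fixpoint substV (i : nat) (p : mso) : mso :=
  match p with
  | ExV j q => ExV j (substV i q)
  | ExS j q => ExS j (substV i q)
  | Or q r => Or (substV i q) (substV i r)
  | Not q => Not (substV i q)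
  | Adj a b => Adj (substVt i a) (substVt i b)
  | Eqv a b => Eqv (substVt i a) (substVt i b)
  | Mem a Y => Mem (substVt i a) Y
  end.

Fixpoint substS (i : nat) (p : mso) : mso :=
  match p with
  | ExV j q => ExV j (substS i q)
  | ExS j q => ExS j (substS i q)
  | Or q r => Or (substS i q) (substS i r)
  | Not q => Not (substS i q)
  | Mem a Y => Mem a (substSt i Y)
  | _ => p
  end.

Fixpoint msize (p : mso) : nat :=
  match p with
  | ExV _ q | ExS _ q | Not q => (msize q).+1
  | Or q r => (msize q + msize r).+1
  | _ => 1
  end.

Definition set_label (T : finType) (t : triplet T) (i : nat) (v : T) : triplet T :=
  Triplet (tV t) (tE t) (fun j => if j == i then Some v else tl t j) (tc t).
Definition set_color (T : finType) (t : triplet T) (i : nat) (S : {set T}) : triplet T :=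
  Triplet (tV t) (tE t) (tl t) (fun j => if j == i then Some S else tc t j).

(* Satisfaction, defined by recursion on a fuel bounding the formula size
   (substitution preserves size, so fuel msize p suffices). *)
Fixpoint satn (T : finType) (n : nat) (t : triplet T) (p : mso) : Prop :=
  match n with
  | 0 => False
  | n'.+1 =>
    match p with
    | ExV i q => tl t i = None /\
        exists2 v, v \in tV t & satn n' (set_label t i v) (substV i q)
    | ExS i q => tc t i = None /\
        exists2 A : {set T}, A \subset tV t & satn n' (set_color t i A) (substS i q)
    | Or q r => satn n' t q \/ satn n' t r
    | Not q => ~ satn n' t q
    | Adj (VCon i) (VCon j) =>
        match tl t i, tl t j with
        | Some x, Some y => tE t x y = true
        | _, _ => False
        end
    | Eqv (VCon i) (VCon j) =>
        match tl t i, tl t j with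
        | Some x, Some y => x = y
        | _, _ => False
        end
    | Mem (VCon i) (SCon j) =>
        match tl t i, tc t j with
        | Some x, Some A => x \in A
        | _, _ => False
        end
    | _ => False   (* atom with a free variable: not satisfied *)
    end
  end.

Definition sat (T : finType) (t : triplet T) (p : mso) : Prop :=
  satn (msize p) t p.

Fixpoint qfree (p : mso) : bool :=
  match p with
  | ExV _ _ | ExS _ _ => false
  | Or q r => qfree q && qfree r
  | Not q => qfree q
  | _ => true
  end.

(* prenex: all quantifiers at the beginning (negations may be interleaved
   in the prefix, since there is no primitive universal quantifier) *)
Fixpoint prenex (p : mso) : bool :=
  match p with
  | ExV _ q | ExS _ q | Not q => prenex q
  | _ => qfree p
  end.

Fixpoint countV (p : mso) : nat :=
  match p with
  | ExV _ q => (countV q).+1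
  | ExS _ q | Not q => countV q
  | Or q r => countV q + countV r
  | _ => 0
  end.

Fixpoint countS (p : mso) : nat :=
  match p with
  | ExS _ q => (countS q).+1
  | ExV _ q | Not q => countS q
  | Or q r => countS q + countS r
  | _ => 0
  end.

Definition triplet_iso (T : finType) (t1 t2 : triplet T) (f : T -> T) : Prop :=
  [/\ f @: tV t1 = tV t2,
      {in tV t1 &, injective f},
      {in tV t1 &, forall x y, tE t2 (f x) (f y) = tE t1 x y},
      (forall i, omap f (tl t1 i) = tl t2 i) &
      (forall i, omap (fun S : {set T} => f @: S) (tc t1 i) = tc t2 i)].

Definition same_type (T : finType) (t : triplet T) (C1 C2 : {set T}) : Prop :=
  exists f, [/\ triplet_iso t t f,
    {in C1, forall x, f x \in C2},
    {in C2, forall x, f x \in C1} &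
    {in tV t :\: (C1 :|: C2), forall x, f x = x}].

Definition delete (T : finType) (t : triplet T) (C : {set T}) : triplet T :=
  Triplet (tV t :\: C) (tE t) (tl t) (fun i => omap (fun S : {set T} => S :\: C) (tc t i)).

(* Main.v *)
Require Import Defs.
From mathcomp Require Import all_boot.
From Stdlib Require Import FunctionalExtensionality ClassicalEpsilon Lia.
From mathcomp Require Import zify.
Set Implicit Arguments. Unset Strict Implicit. Unset Printing Implicit Defensive.

Lemma msize_substV i p : msize (substV i p) = msize p.
Proof. elim: p => [j q IH|j q IH|q IHq r IHr|q IH|a b|a b|a Y] /=; rewrite ?IH ?IHq ?IHr //; by rewrite ?qfree_substV ?qfree_substS. Qed.
Lemma msize_substS i p : msize (substS i p) = msize p.
Proof. elim: p => [j q IH|j q IH|q IHq r IHr|q IH|a b|a b|a Y] /=; rewrite ?IH ?IHq ?IHr //; by rewrite ?qfree_substV ?qfree_substS. Qed.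
Lemma qfree_substV i p : qfree (substV i p) = qfree p.
Proof. elim: p => [j q IH|j q IH|q IHq r IHr|q IH|a b|a b|a Y] /=; rewrite ?IH ?IHq ?IHr //; by rewrite ?qfree_substV ?qfree_substS. Qed.
Lemma qfree_substS i p : qfree (substS i p) = qfree p.
Proof. elim: p => [j q IH|j q IH|q IHq r IHr|q IH|a b|a b|a Y] /=; rewrite ?IH ?IHq ?IHr //; by rewrite ?qfree_substV ?qfree_substS. Qed.
Lemma prenex_substV i p : prenex (substV i p) = prenex p.
Proof. elim: p => [j q IH|j q IH|q IHq r IHr|q IH|a b|a b|a Y] /=; rewrite ?IH ?IHq ?IHr //; by rewrite ?qfree_substV ?qfree_substS. Qed.
Lemma prenex_substS i p : prenex (substS i p) = prenex p.
Proof. elim: p => [j q IH|j q IH|q IHq r IHr|q IH|a b|a b|a Y] /=; rewrite ?IH ?IHq ?IHr //; by rewrite ?qfree_substV ?qfree_substS. Qed.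
Lemma countV_substV i p : countV (substV i p) = countV p.
Proof. elim: p => [j q IH|j q IH|q IHq r IHr|q IH|a b|a b|a Y] /=; rewrite ?IH ?IHq ?IHr //; by rewrite ?qfree_substV ?qfree_substS. Qed.
Lemma countV_substS i p : countV (substS i p) = countV p.
Proof. elim: p => [j q IH|j q IH|q IHq r IHr|q IH|a b|a b|a Y] /=; rewrite ?IH ?IHq ?IHr //; by rewrite ?qfree_substV ?qfree_substS. Qed.
Lemma countS_substV i p : countS (substV i p) = countS p.
Proof. elim: p => [j q IH|j q IH|q IHq r IHr|q IH|a b|a b|a Y] /=; rewrite ?IH ?IHq ?IHr //; by rewrite ?qfree_substV ?qfree_substS. Qed.
Lemma countS_substS i p : countS (substS i p) = countS p.
Proof. elim: p => [j q IH|j q IH|q IHq r IHr|q IH|a b|a b|a Y] /=; rewrite ?IH ?IHq ?IHr //; by rewrite ?qfree_substV ?qfree_substS. Qed.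
Lemma qfree_count p : qfree p -> countV p = 0 /\ countS p = 0.
Proof. elim: p => [j q IH|j q IH|q IHq r IHr|q IH|a b|a b|a Y] //=. by case/andP=> /IHq[-> ->] /IHr[-> ->]. Qed.

Section S.
Variable T : finType.
Implicit Types (t : triplet T).

Lemma satV t x q : sat t (ExV x q) <->
  tl t x = None /\ exists2 v, v \in tV t & sat (set_label t x v) (substV x q).
Proof. by rewrite /sat /= msize_substV. Qed.
Lemma satS t x q : sat t (ExS x q) <->
  tc t x = None /\ exists2 A : {set T}, A \subset tV t & sat (set_color t x A) (substS x q).
Proof. by rewrite /sat /= msize_substS. Qed.
Lemma satN t q : sat t (Not q) <-> ~ sat t q.
Proof. by []. Qed.


Definition wfl t := (forall i v, tl t i = Some v -> v \in tV t) /\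
  (forall i S, tc t i = Some S -> S \subset tV t).
Definition aut t f := triplet_iso t t f.

Lemma imset_in_eq (h : T -> T) (S : {set T}) :
  {in S &, injective h} -> h @: S \subset S -> h @: S = S.
Proof. move=> inj sub; apply/eqP; rewrite eqEcard sub /= card_in_imset //. Qed.

Lemma iso_in t1 t2 f x : triplet_iso t1 t2 f -> x \in tV t1 -> f x \in tV t2.
Proof. by case=> E1 _ _ _ _ xV; rewrite -E1; apply: imset_f. Qed.

Lemma iso_label t1 t2 f i v : triplet_iso t1 t2 f ->
  triplet_iso (set_label t1 i v) (set_label t2 i (f v)) f.
Proof.
case=> E1 E2 E3 E4 E5; split=> //= j; case: ifP=> // _; exact: E4.
Qed.
Lemma iso_color t1 t2 f i (A : {set T}) : triplet_iso t1 t2 f ->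
  triplet_iso (set_color t1 i A) (set_color t2 i (f @: A)) f.
Proof.
case=> E1 E2 E3 E4 E5; split=> //= j; case: ifP=> // _; exact: E5.
Qed.
Lemma wfl_label t i v : wfl t -> v \in tV t -> wfl (set_label t i v).
Proof. rewrite /wfl /=; case=> W1 W2 vV; split=> //= j w; case: ifP=> [_ [<-] //|_]; exact: W1. Qed.
Lemma wfl_color t i (A : {set T}) : wfl t -> A \subset tV t -> wfl (set_color t i A).
Proof. rewrite /wfl /=; case=> W1 W2 AV; split=> //= j w; case: ifP=> [_ [<-] //|_]; exact: W2. Qed.

Lemma sat_iso n t1 t2 f p : wfl t1 -> triplet_iso t1 t2 f ->
  satn n t1 p <-> satn n t2 p.
Proof.
elim: n t1 t2 p => [//|n IH] t1 t2 p W iso.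
have [E1 E2 E3 E4 E5] := iso.
have [W1 W2] := W.
case: p => [i q|i q|q r|q|a b|a b|a Y] /=.
- rewrite -E4; case: (tl t1 i) => [x|] /=; first by split=> -[].
  split=> -[_ [v vV H]]; split=> //.
    exists (f v); first exact: iso_in iso vV.
    by apply/(IH _ _ _ (wfl_label i W vV) (iso_label i v iso)).
  have := vV; rewrite -E1 => /imsetP[w wV vE]; rewrite vE in H; exists w => //.
  by apply/(IH _ _ _ (wfl_label i W wV) (iso_label i w iso)).
- rewrite -E5; case: (tc t1 i) => [x|] /=; first by split=> -[].
  split=> -[_ [A AV H]]; split=> //.
    exists (f @: A); first by rewrite -E1; apply: imsetS.
    by apply/(IH _ _ _ (wfl_color i W AV) (iso_color i A iso)).
  pose B := [set x in tV t1 | f x \in A].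
  have fB : f @: B = A.
    apply/setP=> y; apply/imsetP/idP => [[x] | yA].
      by rewrite inE => /andP[_ ?] ->.
    have : y \in f @: tV t1 by rewrite E1; apply: (subsetP AV).
    by case/imsetP=> x xV yE; exists x => //; rewrite inE xV -yE.
  exists B; first by apply/subsetP=> x; rewrite inE => /andP[].
  have BV : B \subset tV t1 by apply/subsetP=> x; rewrite inE => /andP[].
  by apply/(IH _ _ _ (wfl_color i W BV) (iso_color i B iso)); rewrite fB.
- by rewrite (IH _ _ q W iso) (IH t1 t2 r W iso).
- by rewrite (IH _ _ q W iso).
- case: a => [ia|ia]; case: b => [ib|ib] //=; rewrite -!E4.
  case E: (tl t1 ia) => [x|] //=; case E': (tl t1 ib) => [y|] //=.
  by rewrite E3 //; [exact: W1 E | exact: W1 E'].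
- case: a => [ia|ia]; case: b => [ib|ib] //=; rewrite -!E4.
  case E: (tl t1 ia) => [x|] //=; case E': (tl t1 ib) => [y|] //=.
  split=> [->//|]; exact: E2 (W1 _ _ E) (W1 _ _ E').
- case: a => [ia|ia]; case: Y => [iY|iY] //=; rewrite -E4 -E5.
  case E: (tl t1 ia) => [x|] //=; case E': (tc t1 iY) => [S|] //=.
  split=> [xS|/imsetP[y yS /(E2 _ _ (W1 _ _ E) (subsetP (W2 _ _ E') _ yS)) ->//]].
  exact: imset_f.
Qed.


Lemma aut_comp t f g : aut t f -> aut t g -> aut t (f \o g).
Proof.
case=> F1 F2 F3 F4 F5 [G1 G2 G3 G4 G5]; split.
- by rewrite imset_comp G1 F1.
- have gV z : z \in tV t -> g z \in tV t by move=> zV; rewrite -G1; exact: imset_f.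
  by move=> x y xV yV /= /F2 H; apply: G2 => //; apply: H; apply: gV.
- have gV z : z \in tV t -> g z \in tV t by move=> zV; rewrite -G1; exact: imset_f.
  by move=> x y xV yV /=; rewrite F3 ?G3 // gV.
- by move=> i; case: (tl t i) (F4 i) (G4 i) => //= v [fv] [gv]; rewrite gv fv.
- by move=> i; case: (tc t i) (F5 i) (G5 i) => //= S [fS] [gS]; rewrite imset_comp gS fS.
Qed.

Definition finv t (f : T -> T) x :=
  if [pick y in tV t | f y == x] is Some y then y else x.

Lemma finvP t f x : aut t f -> x \in tV t -> finv t f x \in tV t /\ f (finv t f x) = x.
Proof.
case=> F1 _ _ _ _ xV; rewrite /finv; case: pickP => [y /andP[yV /eqP]//|none].
have : x \in f @: tV t by rewrite F1.
by case/imsetP=> y yV xE; move: (none y); rewrite yV xE eqxx.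
Qed.

Lemma finv_f t f y : aut t f -> y \in tV t -> finv t f (f y) = y.
Proof.
move=> A yV; have fyV : f y \in tV t by exact: iso_in A yV.
have [zV fz] := finvP A fyV; case: A => _ F2 _ _ _; exact: F2.
Qed.

Lemma aut_inv t f : wfl t -> aut t f -> aut t (finv t f).
Proof.
move=> [W1 W2] A; have [F1 F2 F3 F4 F5] := A.
have inj : {in tV t &, injective (finv t f)}.
  move=> x y xV yV E; have [_ <-] := finvP A xV; have [_ <-] := finvP A yV; by rewrite E.
split=> //.
- apply: imset_in_eq => //; apply/subsetP=> y /imsetP[x xV ->]; exact: (finvP A xV).1.
- move=> x y xV yV; have [xV' fx] := finvP A xV; have [yV' fy] := finvP A yV.
  by rewrite -(F3 _ _ xV' yV') fx fy.
- move=> i; case E: (tl t i) => [v|] //=; have := F4 i; rewrite E /= => -[fv].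
  by rewrite -{1}fv finv_f // (W1 _ _ E).
- move=> i; case E: (tc t i) => [S|] //=; have := F5 i; rewrite E /= => -[fS].
  have SV := W2 _ _ E.
  congr Some; apply: imset_in_eq; first by move=> x y /(subsetP SV) xV /(subsetP SV) yV; exact: inj.
  apply/subsetP=> y /imsetP[x xS ->].
  have : x \in f @: S by rewrite fS.
  by case/imsetP=> z zS ->; rewrite finv_f // (subsetP SV).
Qed.

Lemma aut_pairs t h : wfl t ->
  (forall x y, x \in tV t -> y \in tV t -> exists g, [/\ aut t g, g x = h x & g y = h y]) ->
  aut t h.
Proof.
move=> [W1 W2] P.
have hV x : x \in tV t -> h x \in tV t.
  by move=> xV; have [g [A <- _]] := P x x xV xV; exact: iso_in A xV.
have inj : {in tV t &, injective h}.
  move=> x y xV yV; have [g [[_ G2 _ _ _] <- <-]] := P x y xV yV; exact: G2.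
split=> //.
- by apply: imset_in_eq => //; apply/subsetP=> y /imsetP[x xV ->]; exact: hV.
- by move=> x y xV yV; have [g [[_ _ G3 _ _] <- <-]] := P x y xV yV; exact: G3.
- move=> i; case E: (tl t i) => [v|] //=; have vV := W1 _ _ E.
  have [g [[_ _ _ G4 _] gv _]] := P v v vV vV.
  by have := G4 i; rewrite E /= -gv.
- move=> i; case E: (tc t i) => [S|] //=; have SV := W2 _ _ E.
  congr Some; apply: imset_in_eq.
    by move=> x y /(subsetP SV) xV /(subsetP SV) yV; exact: inj.
  apply/subsetP=> y /imsetP[x xS ->]; have xV := subsetP SV _ xS.
  have [g [[_ _ _ _ G5] gx _]] := P x x xV xV.
  by have := G5 i; rewrite E /= => -[<-]; rewrite -gx; exact: imset_f.
Qed.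

End S.

Section D.
Variable T : finType.
Implicit Types (t : triplet T) (P Q R Z : {set T}).

Definition swp t (W : T -> T) P Q :=
  [/\ aut t W, {in P, forall x, W x \in Q}, {in Q, forall x, W x \in P} &
      {in tV t :\: (P :|: Q), forall x, W x = x}].

Lemma st_swp t P Q : same_type t P Q <-> exists W, swp t W P Q.
Proof. by []. Qed.

Lemma swp_sym t W P Q : swp t W P Q -> swp t W Q P.
Proof. by case=> A H1 H2 H3; split=> //; rewrite setUC. Qed.

Lemma same_type_sym t P Q : same_type t P Q -> same_type t Q P.
Proof. by case=> W /swp_sym H; exists W. Qed.

Lemma dis_in P Q x : [disjoint P & Q] -> x \in P -> x \in Q -> False.
Proof. by move=> D xP; rewrite (disjointFr D xP). Qed.

Lemma outPQ t P Q x : x \in tV t -> x \notin P -> x \notin Q -> x \in tV t :\: (P :|: Q).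
Proof. by move=> xV xP xQ; rewrite !inE negb_or xP xQ xV. Qed.

Lemma swp_V t W P Q x : swp t W P Q -> x \in tV t -> W x \in tV t.
Proof. by case=> A _ _ _; exact: iso_in. Qed.

Lemma swp_inv t W P Q : wfl t -> P \subset tV t -> Q \subset tV t -> [disjoint P & Q] ->
  swp t W P Q -> swp t (finv t W) P Q.
Proof.
move=> wf PV QV D S; have [A H1 H2 H3] := S.
have Ai := aut_inv wf A.
split=> //.
- move=> x xP; have [yV fy] := finvP A (subsetP PV _ xP).
  set y := finv t W x in yV fy *.
  case: (boolP (y \in Q)) => // yQ.
  case: (boolP (y \in P)) => yP.
    by have := H1 _ yP; rewrite fy => xQ; case: (dis_in D xP xQ).
  by move: (H3 _ (outPQ yV yP yQ)); rewrite fy => E; rewrite -E xP in yP.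
- move=> x xQ; have [yV fy] := finvP A (subsetP QV _ xQ).
  set y := finv t W x in yV fy *.
  case: (boolP (y \in P)) => // yP.
  case: (boolP (y \in Q)) => yQ.
    by have := H2 _ yQ; rewrite fy => xP; case: (dis_in D xP xQ).
  by move: (H3 _ (outPQ yV yP yQ)); rewrite fy => E; rewrite -E xQ in yQ.
- move=> x xo; have := H3 _ xo; move: xo; rewrite inE => /andP[_ xV] E.
  by rewrite -{1}E finv_f.
Qed.

Lemma swp_fix t W P Q x : swp t W P Q -> x \in tV t -> x \notin P -> x \notin Q -> W x = x.
Proof. by case=> _ _ _ H xV xP xQ; apply: H; apply: outPQ. Qed.

Lemma swp_image t W P Q Z : P \subset tV t -> Q \subset tV t -> [disjoint P & Q] ->
  swp t W P Q -> Z \subset tV t -> W @: Z = Z -> W @: (Z :\: P) = Z :\: Q.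
Proof.
move=> PV QV D S ZV WZ; have [A H1 H2 H3] := S.
have notQ x : x \in tV t -> x \notin P -> W x \notin Q.
  move=> xV xP; apply/negP => WxQ.
  case: (boolP (x \in Q)) => xQ.
    by have := H2 _ xQ => WxP; case: (dis_in D WxP WxQ).
  by rewrite (swp_fix S xV xP xQ) (negbTE xQ) in WxQ.
apply/setP=> y; rewrite inE; apply/imsetP/andP.
- case=> x; rewrite inE => /andP[xP xZ] ->; split; last by rewrite -WZ imset_f.
  exact: notQ (subsetP ZV _ xZ) xP.
- case=> yQ yZ; have : y \in W @: Z by rewrite WZ.
  case/imsetP=> x xZ yE; exists x => //; rewrite inE xZ andbT.
  by apply/negP => xP; move: (H1 _ xP); rewrite -yE (negbTE yQ).
Qed.

Lemma swp_imP t W P Q : P \subset tV t -> Q \subset tV t -> [disjoint P & Q] ->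
  swp t W P Q -> W @: P = Q.
Proof.
move=> PV QV D S; have [[_ inj _ _ _] H1 H2 H3] := S.
have sub1 : W @: P \subset Q by apply/subsetP=> y /imsetP[x xP ->]; exact: H1.
have sub2 : W @: Q \subset P by apply/subsetP=> y /imsetP[x xP ->]; exact: H2.
have c1 : #|W @: P| = #|P| by apply: card_in_imset => x y /(subsetP PV) ? /(subsetP PV) ?; exact: inj.
have c2 : #|W @: Q| = #|Q| by apply: card_in_imset => x y /(subsetP QV) ? /(subsetP QV) ?; exact: inj.
apply/eqP; rewrite eqEcard sub1 c1 /=.
by rewrite -c2 subset_leq_card.
Qed.

End D.


Section E.
Variable T : finType.
Implicit Types (t : triplet T) (P Q R Z : {set T}).

Lemma invol t P Q R : wfl t -> P \subset tV t -> Q \subset tV t -> R \subset tV t ->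
  [disjoint P & Q] -> [disjoint P & R] -> [disjoint Q & R] ->
  same_type t P Q -> same_type t P R ->
  exists H, swp t H P Q /\ {in tV t, forall x, H (H x) = x}.
Proof.
move=> wf PV QV RV DPQ DPR DQR [f Sf] [g Sg].
have Sfi := swp_inv wf PV QV DPQ Sf.
have Sgi := swp_inv wf PV RV DPR Sg.
have [Af _ _ _] := Sf; have [Ag _ _ _] := Sg.
set fi := finv t f in Sfi *; set gi := finv t g in Sgi *.
pose H x := if x \in P then f x else if x \in Q then fi x else x.
pose W := f \o gi \o fi \o g \o f \o gi \o fi.
have inV (S : {set T}) x : S \subset tV t -> x \in S -> x \in tV t by move=> SV; apply: (subsetP SV x).
have nPQ x : x \in P -> x \notin Q by move=> xP; rewrite (disjointFr DPQ xP).
have nQP x : x \in Q -> x \notin P by move=> xQ; rewrite (disjointFl DPQ xQ).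
have nPR x : x \in P -> x \notin R by move=> xP; rewrite (disjointFr DPR xP).
have nRP x : x \in R -> x \notin P by move=> xR; rewrite (disjointFl DPR xR).
have nQR x : x \in Q -> x \notin R by move=> xQ; rewrite (disjointFr DQR xQ).
have nRQ x : x \in R -> x \notin Q by move=> xR; rewrite (disjointFl DQR xR).
have ha x : x \in tV t -> x \notin Q -> f x = H x.
  move=> xV xQ; rewrite /H; case: ifP => // xP.
  have xP' : x \notin P by rewrite xP.
  by rewrite (swp_fix Sf xV xP' xQ) (negbTE xQ).
have hb x : x \in tV t -> x \notin P -> fi x = H x.
  move=> xV xP; rewrite /H (negbTE xP); case: ifP => // xQ.
  have xQ' : x \notin Q by rewrite xQ.
  by rewrite (swp_fix Sfi xV xP xQ').
have hc x : x \in P :|: Q -> W x = H x.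
  case/setUP => [xP|xQ].
  - have xV := inV _ _ PV xP.
    have uQ : fi x \in Q by case: Sfi => _ H1 _ _; exact: H1.
    have uV := inV _ _ QV uQ.
    have e1 : gi (fi x) = fi x by rewrite (swp_fix Sgi uV (nQP _ uQ) (nQR _ uQ)).
    have e2 : f (fi x) = x by have [] := finvP Af xV.
    have pR : g x \in R by case: Sg => _ H1 _ _; exact: H1.
    have pV := inV _ _ RV pR.
    have e3 : fi (g x) = g x by rewrite (swp_fix Sfi pV (nRP _ pR) (nRQ _ pR)).
    have e4 : gi (g x) = x by rewrite /gi finv_f.
    by rewrite /W /= e1 e2 e3 e4 /H xP.
  - have xV := inV _ _ QV xQ.
    have eP : fi x \in P by case: Sfi => _ _ H2 _; exact: H2.
    have eV := inV _ _ PV eP.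
    have pR : gi (fi x) \in R by case: Sgi => _ H1 _ _; exact: H1.
    have pV := inV _ _ RV pR.
    have e1 : f (gi (fi x)) = gi (fi x) by rewrite (swp_fix Sf pV (nRP _ pR) (nRQ _ pR)).
    have e2 : g (gi (fi x)) = fi x by have [] := finvP Ag eV.
    have qQ : fi (fi x) \in Q by case: Sfi => _ H1 _ _; exact: H1.
    have qV := inV _ _ QV qQ.
    have e3 : gi (fi (fi x)) = fi (fi x) by rewrite (swp_fix Sgi qV (nQP _ qQ) (nQR _ qQ)).
    have e4 : f (fi (fi x)) = fi x by have [] := finvP Af eV.
    by rewrite /W /= e1 e2 e3 e4 /H (negbTE (nQP _ xQ)) xQ.
have AH : aut t H.
  apply: aut_pairs => // x y xV yV.
  case: (boolP ((x \in P :|: Q) && (y \in P :|: Q))) => [/andP[xPQ yPQ]|nb].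
    exists W; split; [|exact: hc|exact: hc].
    have [Afi _ _ _] := Sfi; have [Agi _ _ _] := Sgi.
    exact: (aut_comp (aut_comp (aut_comp (aut_comp (aut_comp (aut_comp Af Agi) Afi) Ag) Af) Agi) Afi).
  case: (boolP ((x \notin Q) && (y \notin Q))) => [/andP[xQ yQ]|nq].
    by exists f; split; [|exact: ha|exact: ha].
  case: (boolP ((x \notin P) && (y \notin P))) => [/andP[xP yP]|np].
    by exists fi; split; [case: Sfi|exact: hb|exact: hb].
  exfalso; move: nb nq np; rewrite !inE !negb_and !negbK.
  case: (boolP (x \in P)) => xP; case: (boolP (x \in Q)) => xQ;
  case: (boolP (y \in P)) => yP; case: (boolP (y \in Q)) => yQ //=;
  by [case: (dis_in DPQ xP xQ) | case: (dis_in DPQ yP yQ)].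
exists H; split.
  split=> //.
  - by move=> x xP; rewrite /H xP; case: Sf => _ H1 _ _; exact: H1.
  - move=> x xQ; rewrite /H (negbTE (nQP _ xQ)) xQ; case: Sfi => _ _ H2 _; exact: H2.
  - by move=> x; rewrite !inE negb_or => /andP[/andP[xP xQ] _]; rewrite /H (negbTE xP) (negbTE xQ).
move=> x xV; rewrite {2}/H; case: ifP => xP.
  have fQ : f x \in Q by case: Sf => _ H1 _ _; exact: H1.
  by rewrite /H (negbTE (nQP _ fQ)) fQ /fi finv_f.
case: ifP => xQ.
  have eP : fi x \in P by case: Sfi => _ _ H2 _; exact: H2.
  by rewrite /H eP; have [] := finvP Af xV.
by rewrite /H xP xQ.
Qed.

End E.

Section F.
Variable T : finType.
Implicit Types (t : triplet T) (P Q R Z A D : {set T}).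

Record Inv k t (C : nat -> {set T}) (I : seq nat) : Prop := {
  I_uniq : uniq I;
  I_sub : forall i, i \in I -> C i \subset tV t;
  I_card : forall i, i \in I -> #|C i| <= k;
  I_dis : forall i j, i \in I -> j \in I -> i != j -> [disjoint C i & C j];
  I_st : forall i j, i \in I -> j \in I -> i != j -> same_type t (C i) (C j);
  I_lab : forall i x v, i \in I -> tl t x = Some v -> v \notin C i;
  I_wf : wfl t }.

Lemma Inv_sub k t C I J : Inv k t C I -> uniq J -> {subset J <= I} -> Inv k t C J.
Proof.
case=> U Su Ca Di St La W UJ sJ; split=> //.
- by move=> i /sJ; apply: Su.
- by move=> i /sJ; apply: Ca.
- by move=> i j /sJ iI /sJ jI; apply: Di.
- by move=> i j /sJ iI /sJ jI; apply: St.
- by move=> i x v /sJ; apply: La.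
Qed.

Lemma swp_label t W P Q x v : swp t W P Q -> v \in tV t -> v \notin P -> v \notin Q ->
  swp (set_label t x v) W P Q.
Proof.
move=> S vV vP vQ; have := swp_fix S vV vP vQ; case: S => A H1 H2 H3 fv.
split=> //; have := iso_label x v A; by rewrite fv.
Qed.

Lemma Inv_label k t C I x v : Inv k t C I -> v \in tV t ->
  (forall i, i \in I -> v \notin C i) -> Inv k (set_label t x v) C I.
Proof.
case=> U Su Ca Di St La W vV vC; split=> //.
- move=> i j iI jI ij; have [f Sf] := St i j iI jI ij.
  by exists f; apply: swp_label => //; apply: vC.
- move=> i y w iI /=; case: ifP => _; [by case=> <-; apply: vC | exact: La].
- exact: wfl_label.
Qed.

Lemma swp_color t W P Q X A : swp t W P Q -> W @: A = A -> swp (set_color t X A) W P Q.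
Proof.
case=> Aut H1 H2 H3 WA; split=> //; have := iso_color X A Aut; by rewrite WA.
Qed.

Lemma Inv_color k t C I X A : Inv k t C I -> A \subset tV t ->
  (forall i j, i \in I -> j \in I -> i != j -> same_type (set_color t X A) (C i) (C j)) ->
  Inv k (set_color t X A) C I.
Proof. case=> U Su Ca Di St La W AV St'; split=> //; exact: wfl_color. Qed.

Lemma delete_color t X A D :
  delete (set_color t X A) D = set_color (delete t D) X (A :\: D).
Proof.
rewrite /delete /set_color /=; congr Triplet.
by apply: functional_extensionality => j; case: ifP.
Qed.

Lemma delete_label t x v D :
  delete (set_label t x v) D = set_label (delete t D) x v.
Proof. by []. Qed.

Lemma wfl_delete t D : wfl t -> (forall x v, tl t x = Some v -> v \notin D) -> wfl (delete t D).
Proof.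
case=> W1 W2 L; split=> /= [x v E|i S].
  by rewrite inE (L _ _ E) (W1 _ _ E).
case E: (tc t i) => [S'|] //= [<-]; exact: setSD (W2 _ _ E).
Qed.

Lemma transfer k t C I i j p : Inv k t C I -> i \in I -> j \in I ->
  sat (delete t (C i)) p <-> sat (delete t (C j)) p.
Proof.
move=> Iv iI jI; case: (eqVneq i j) => [->//|ij].
have [U Su Ca Di St La [W1 W2]] := Iv.
have [f Sf] := St i j iI jI ij.
have [Af _ _ _] := Sf; have [F1 F2 F3 F4 F5] := Af.
have PV := Su i iI; have QV := Su j jI; have D := Di i j iI jI ij.
apply: (sat_iso _ (f := f)).
  by apply: wfl_delete; [split | move=> x v; apply: La].
split=> /=.
- exact: (swp_image PV QV D Sf (subxx _) F1).
- by move=> x y; rewrite !inE => /andP[_ ?] /andP[_ ?]; apply: F2.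
- by move=> x y; rewrite !inE => /andP[_ ?] /andP[_ ?]; apply: F3.
- exact: F4.
- move=> x; case E: (tc t x) => [S|] //=; congr Some.
  have := F5 x; rewrite E /= => -[fS].
  exact: (swp_image PV QV D Sf (W2 _ _ E) fS).
Qed.

Lemma sat_qfree_delete n t D p : qfree p ->
  (forall x v, tl t x = Some v -> v \notin D) ->
  satn n t p <-> satn n (delete t D) p.
Proof.
move=> + L; elim: n p => [//|n IH] p.
case: p => [x q|X q|q r|q|a b|a b|a Y] //=.
- by case/andP=> /IH -> /IH ->.
- by move/IH ->.
- move=> _; case: a => [ia|ia]; case: Y => [iY|iY] //=.
  case E: (tl t ia) => [v|] //=; case: (tc t iY) => [S|] //=.
  by rewrite inE (L _ _ E).
Qed.

Lemma pigeon_sum (J : seq nat) (cls : nat -> {set T}) R :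
  (forall j, j \in J -> cls j \subset R) ->
  size J = \sum_(S in powerset R) count (fun j => cls j == S) J.
Proof.
elim: J => [|x J IHJ] H /=; first by rewrite big1.
rewrite big_split /= -IHJ; last by move=> j jJ; apply: H; rewrite inE jJ orbT.
rewrite (bigD1 (cls x)) /=; last by rewrite powersetE H // inE eqxx.
rewrite eqxx big1 ?addn0 //.
by move=> S /andP[_ ne]; rewrite eq_sym (negbTE ne).
Qed.

Lemma pigeon (J : seq nat) (cls : nat -> {set T}) R m :
  (forall j, j \in J -> cls j \subset R) -> 2 ^ #|R| * m < size J ->
  exists S, m < count (fun j => cls j == S) J.
Proof.
move=> H; rewrite (pigeon_sum H) => lt.
apply/not_all_not_ex => none.
have : \sum_(S in powerset R) count (fun j => cls j == S) J <= \sum_(S in powerset R) m.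
  by apply: leq_sum => S _; rewrite leqNgt; apply/negP; apply: none.
by rewrite sum_nat_const card_powerset mulnC leqNgt mulnC lt.
Qed.

End F.

Section G.
Variable T : finType.
Implicit Types (t : triplet T) (P Q R Z A D : {set T}).

Lemma count_le1 (I : seq nat) (p : pred nat) : uniq I ->
  (forall i j, i \in I -> j \in I -> i != j -> p i -> p j -> False) -> count p I <= 1.
Proof.
elim: I => [//|x I IHI] /= /andP[xI U] H.
case: (boolP (p x)) => px /=.
  suff -> : count p I = 0 by [].
  apply/eqP; rewrite -leqn0 leqNgt -has_count.
  apply/hasP => -[j jI pj]; apply: (H x j) => //; rewrite ?inE ?eqxx ?jI ?orbT //.
  by apply/eqP => E; rewrite E jI in xI.
by apply: IHI => // i j iI jI; apply: H; rewrite inE ?iI ?jI orbT.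
Qed.

Lemma size_filter_ge (I : seq nat) (p : pred nat) :
  count (predC p) I <= 1 -> size I <= (size (filter p I)).+1.
Proof.
move=> c; rewrite size_filter; have := count_predC p I; lia.
Qed.

Lemma third (I : seq nat) a b : uniq I -> 2 < size I -> exists2 l, l \in I & (l != a) && (l != b).
Proof.
move=> U s.
have : size [seq l <- I | l \in [:: a; b]] <= size [:: a; b].
  apply: uniq_leq_size; first exact: filter_uniq.
  by move=> l; rewrite mem_filter => /andP[].
rewrite size_filter /= => c.
have : 0 < count (predC (fun l => l \in [:: a; b])) I.
  rewrite -(count_predC (fun l => l \in [:: a; b]) I) in s.
  move: c s; move: (count _ I) => n1; move: (count _ I) => n2; lia.
rewrite -has_count => /hasP[l lI]; rewrite /= !inE negb_or => H; by exists l.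
Qed.

Definition cls (Hf : nat -> T -> T) (r : nat) (C : nat -> {set T}) A j :=
  if j == r then A :&: C r else Hf j @: (A :&: C j).

Lemma st_color t W P Q X A : swp t W P Q -> A \subset tV t ->
  (forall x, x \in A -> W x \in A) -> same_type (set_color t X A) P Q.
Proof.
move=> S AV H; exists W; apply: swp_color => //.
have [[_ inj _ _ _] _ _ _] := S.
apply: imset_in_eq.
  by move=> x y /(subsetP AV) ? /(subsetP AV) ?; apply: inj.
by apply/subsetP=> y /imsetP[x xA ->]; apply: H.
Qed.

Lemma cls_st k t C I r (Hf : nat -> T -> T) X A i j :
  Inv k t C I -> r \in I ->
  (forall j, j \in I -> j != r -> swp t (Hf j) (C r) (C j) /\ {in tV t, forall x, Hf j (Hf j x) = x}) ->
  A \subset tV t -> i \in I -> j \in I -> i != j -> cls Hf r C A i = cls Hf r C A j ->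
  same_type (set_color t X A) (C i) (C j).
Proof.
move=> Iv rI HH AV.
have [U Su Ca Di St La W] := Iv.
have inV l x : l \in I -> x \in C l -> x \in tV t by move=> lI; apply: (subsetP (Su l lI)).
have nin l l' x : l \in I -> l' \in I -> l != l' -> x \in C l -> x \notin C l'.
  by move=> lI l'I ll' xl; rewrite (disjointFr (Di l l' lI l'I ll') xl).
have caser j' : j' \in I -> j' != r -> cls Hf r C A r = cls Hf r C A j' ->
    same_type (set_color t X A) (C r) (C j').
  move=> jI jr; rewrite /cls eqxx (negbTE jr) => E.
  have [Sj Ij] := HH j' jI jr.
  apply: (st_color _ Sj AV) => x xA.
  case: (boolP (x \in C r)) => xr.
    have : x \in A :&: C r by rewrite inE xA xr.
    rewrite E => /imsetP[y]; rewrite inE => /andP[yA yj] ->.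
    by rewrite Ij // (inV j').
  case: (boolP (x \in C j')) => xj.
    have : Hf j' x \in Hf j' @: (A :&: C j') by apply: imset_f; rewrite inE xA xj.
    by rewrite -E inE => /andP[].
  by rewrite (swp_fix Sj (subsetP AV _ xA) xr xj).
move=> iI jI ij E.
case: (eqVneq i r) => [ir|ir].
  by rewrite ir in E ij iI *; apply: caser => //; rewrite eq_sym.
case: (eqVneq j r) => [jr|jr].
  by rewrite jr in E ij jI *; apply: same_type_sym; apply: caser.
have [Si Ii] := HH i iI ir; have [Sj Ij] := HH j jI jr.
have [Ai Hi1 Hi2 _] := Si; have [Aj Hj1 Hj2 _] := Sj.
have fixi x : x \in C j -> Hf i x = x.
  move=> xj; apply: (swp_fix Si (inV j x jI xj)); apply: nin xj => //; by rewrite ?jr // eq_sym.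
have fixj x : x \in C i -> Hf j x = x.
  move=> xi; apply: (swp_fix Sj (inV i x iI xi)); apply: nin xi => //; by rewrite ?ir.
have SW : swp t (Hf i \o Hf j \o Hf i) (C i) (C j).
  split.
  - exact: aut_comp (aut_comp Ai Aj) Ai.
  - move=> x xi /=; have yr := Hi2 _ xi; have zj := Hj1 _ yr; by rewrite (fixi _ zj).
  - move=> x xj /=; rewrite (fixi x xj); exact: Hi1 (Hj2 _ xj).
  - move=> x; rewrite !inE negb_or => /andP[/andP[xi xj] xV] /=.
    case: (boolP (x \in C r)) => xr.
      have yi := Hi1 _ xr; by rewrite (fixj _ yi) Ii.
    have Fi : Hf i x = x by apply: (swp_fix Si xV).
    by rewrite Fi (swp_fix Sj xV xr xj) Fi.
apply: (st_color _ SW AV) => x xA.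
move: E; rewrite /cls (negbTE ir) (negbTE jr) => E.
case: (boolP (x \in C i)) => xi.
  have : Hf i x \in Hf i @: (A :&: C i) by apply: imset_f; rewrite inE xA xi.
  rewrite E => /imsetP[y]; rewrite inE => /andP[yA yj] E'.
  by rewrite /= E' Ij ?(inV j) // (fixi _ yj).
case: (boolP (x \in C j)) => xj.
  have : Hf j x \in Hf j @: (A :&: C j) by apply: imset_f; rewrite inE xA xj.
  rewrite -E => /imsetP[y]; rewrite inE => /andP[yA yi] E'.
  by rewrite /= (fixi x xj) E' Ii ?(inV i).
have [_ _ _ F] := SW; by rewrite F // !inE negb_or xi xj (subsetP AV _ xA).
Qed.
End G.

Section H.
Variable T : finType.
Implicit Types (t : triplet T) (P Q R Z A D : {set T}).

Lemma core k : 0 < k -> forall n phi, msize phi <= n -> prenex phi ->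
  forall t (C : nat -> {set T}) I i0, Inv k t C I -> i0 \in I ->
  2 ^ (k * countS phi) * countV phi < size I ->
  (sat t phi <-> sat (delete t (C i0)) phi).
Proof.
move=> k0; elim=> [|n IH] phi; first by case: phi.
move=> Hs Hp t C I i0 Iv i0I Hsz.
have qfcase : qfree phi -> (sat t phi <-> sat (delete t (C i0)) phi).
  move=> qf; apply: sat_qfree_delete => // x v; exact: (I_lab Iv i0I).
case: phi Hs Hp Hsz qfcase => [x q|X q|q r|q|a b|a b|a Y] /= Hs Hp Hsz qfcase;
  try (by apply: qfcase).
-
  have Hs' : msize (substV x q) <= n by rewrite msize_substV.
  have Hp' : prenex (substV x q) by rewrite prenex_substV.
  set P := 2 ^ (k * countS q) in Hsz *.
  have P0 : 0 < P by rewrite expn_gt0.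
  have key v : v \in tV t -> forall J j, Inv k t C J -> j \in J ->
      (forall i, i \in J -> v \notin C i) -> P * countV q < size J ->
      sat (set_label t x v) (substV x q) <-> sat (delete (set_label t x v) (C j)) (substV x q).
    move=> vV J j IvJ jJ vC sz; apply: (IH _ Hs' Hp' _ C J j) => //; first exact: Inv_label.
    by rewrite countS_substV countV_substV.
  pose I' v := [seq i <- I | v \notin C i].
  have sizeI' v : P * countV q < size (I' v).
    have c : count (predC (fun i => v \notin C i)) I <= 1.
      apply: count_le1; first exact: (I_uniq Iv).
      move=> i j iI jI ij /= /negPn vi /negPn vj.
      exact: dis_in (I_dis Iv iI jI ij) vi vj.
    have := size_filter_ge c; rewrite -/(I' v) mulnS in Hsz *; lia.
  have IvI' v : Inv k t C (I' v).
    apply: (Inv_sub Iv); first exact: filter_uniq (I_uniq Iv).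
    by move=> i; rewrite mem_filter => /andP[].
  have vCI' v i : i \in I' v -> v \notin C i by rewrite mem_filter => /andP[].
  split.
  + move=> /satV [xN [v vV Hv]].
    have [j jI'] : exists j, j \in I' v.
      by case E: (I' v) (sizeI' v) => [|j s] //; exists j; rewrite inE eqxx.
    have jI : j \in I by move: jI'; rewrite mem_filter => /andP[].
    have Hj : sat (delete t (C j)) (ExV x q).
      apply/satV; split => //; exists v; first by rewrite inE (vCI' v j jI') vV.
      rewrite -delete_label; exact/(key v vV (I' v) j (IvI' v) jI' (vCI' v)).
    exact/(transfer _ Iv jI i0I).
  + move=> /satV [xN [v]]; rewrite inE => /andP[vi0 vV] Hv.
    apply/satV; split => //; exists v => //.
    have i0I' : i0 \in I' v by rewrite mem_filter vi0.
    exact/(key v vV (I' v) i0 (IvI' v) i0I' (vCI' v)).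
-
  have Hs' : msize (substS X q) <= n by rewrite msize_substS.
  have Hp' : prenex (substS X q) by rewrite prenex_substS.
  set M := 2 ^ (k * countS q) * countV q.
  have HM : 2 ^ k * M < size I by rewrite /M mulnA -expnD -mulnS.
  have key A : A \subset tV t -> forall J j, Inv k (set_color t X A) C J -> j \in J ->
      M < size J ->
      sat (set_color t X A) (substS X q) <-> sat (delete (set_color t X A) (C j)) (substS X q).
    move=> AV J j IvJ jJ sz; apply: (IH _ Hs' Hp' _ C J j) => //.
    by rewrite countS_substS countV_substS.
  case: (posnP M) => [M0|Mpos].
  + split.
    * move=> /satS [XN [A AV HA]].
      apply/satS; split; first by rewrite /= XN.
      exists (A :\: C i0); first exact: setSD.
      rewrite -delete_color; have Iv1 : Inv k (set_color t X A) C [:: i0].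
        apply: Inv_color => //.
          by apply: (Inv_sub Iv) => // i; rewrite inE => /eqP->.
        by move=> i j; rewrite !inE => /eqP-> /eqP->; rewrite eqxx.
      by apply/(key A AV [:: i0] i0 Iv1 (mem_head _ _)); rewrite ?M0.
    * move=> /satS [XN [A AV HA]].
      have XN' : tc t X = None by move: XN => /=; case: (tc t X).
      have AV' : A \subset tV t := subset_trans AV (subsetDl _ _).
      apply/satS; split => //; exists A => //.
      have Iv1 : Inv k (set_color t X A) C [:: i0].
        apply: Inv_color => //.
          by apply: (Inv_sub Iv) => // i; rewrite inE => /eqP->.
        by move=> i j; rewrite !inE => /eqP-> /eqP->; rewrite eqxx.
      apply/(key A AV' [:: i0] i0 Iv1 (mem_head _ _)); first by rewrite M0.
      rewrite delete_color.
      have -> : A :\: C i0 = A.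
        apply/setP=> y; rewrite inE; case yA: (y \in A); rewrite ?andbF ?andbT //.
        by have := subsetP AV y yA; rewrite inE => /andP[].
      exact: HA.
  + have k2 : 2 <= 2 ^ k by rewrite -{1}(expn1 2) leq_exp2l.
    have s3 : 2 < size I.
      have : 2 <= 2 ^ k * M by rewrite -(muln1 2) leq_mul.
      lia.
    have HH : forall j, exists H, j \in I -> j != i0 ->
        swp t H (C i0) (C j) /\ {in tV t, forall x, H (H x) = x}.
      move=> j; case: (boolP ((j \in I) && (j != i0))) => [/andP[jI ji]|nj];
        last by exists id => jI ji; rewrite jI ji in nj.
      have [l lI /andP[li lj]] := third i0 j (I_uniq Iv) s3.
      have i0j : i0 != j by rewrite eq_sym.
      have i0l : i0 != l by rewrite eq_sym.
      have jl : j != l by rewrite eq_sym.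
      have [H [SH IH']] := invol (I_wf Iv) (I_sub Iv i0I) (I_sub Iv jI) (I_sub Iv lI)
        (I_dis Iv i0I jI i0j) (I_dis Iv i0I lI i0l) (I_dis Iv jI lI jl)
        (I_st Iv i0I jI i0j) (I_st Iv i0I lI i0l).
      by exists H.
    pose Hf j := proj1_sig (constructive_indefinite_description _ (HH j)).
    have HfP : forall j, j \in I -> j != i0 ->
        swp t (Hf j) (C i0) (C j) /\ {in tV t, forall x, Hf j (Hf j x) = x}.
      move=> j; exact: (proj2_sig (constructive_indefinite_description _ (HH j))).
    have clsR A j : j \in I -> cls Hf i0 C A j \subset C i0.
      rewrite /cls; case: ifP => [_|/negbT ji] jI; first exact: subsetIr.
      apply/subsetP => y /imsetP[z]; rewrite inE => /andP[_ zj] ->.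
      have [[_ _ H2 _] _] := HfP j jI ji; exact: H2.
    have p2 : 2 ^ #|C i0| <= 2 ^ k by rewrite leq_exp2l // (I_card Iv i0I).
    split.
    * move=> /satS [XN [A AV HA]].
      have [S HS] : exists S, M < count (fun j => cls Hf i0 C A j == S) I.
        apply: (pigeon (R := C i0)); first by move=> j jI; exact: clsR.
        by apply: leq_ltn_trans HM; rewrite leq_mul2r p2 orbT.
      set J := [seq j <- I | cls Hf i0 C A j == S].
      have szJ : M < size J by rewrite size_filter.
      have [j jJ] : exists j, j \in J.
        by case E: J szJ => [|j s] //; exists j; rewrite inE eqxx.
      have jI : j \in I by move: jJ; rewrite mem_filter => /andP[].
      have IvJ : Inv k (set_color t X A) C J.
        apply: Inv_color => //.
          apply: (Inv_sub Iv); first exact: filter_uniq (I_uniq Iv).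
          by move=> i; rewrite mem_filter => /andP[].
        move=> i i'; rewrite !mem_filter => /andP[/eqP ci iI] /andP[/eqP ci' i'I] ii'.
        by apply: (cls_st X Iv i0I HfP AV iI i'I ii'); rewrite ci ci'.
      have Hj : sat (delete t (C j)) (ExS X q).
        apply/satS; split; first by rewrite /= XN.
        exists (A :\: C j); first exact: setSD.
        rewrite -delete_color; exact/(key A AV J j IvJ jJ szJ).
      exact/(transfer _ Iv jI i0I).
    * move=> /satS [XN [A AV HA]].
      have XN' : tc t X = None by move: XN => /=; case: (tc t X).
      have AV' : A \subset tV t := subset_trans AV (subsetDl _ _).
      have Ai0 y : y \in A -> y \notin C i0.
        by move=> yA; have := subsetP AV y yA; rewrite inE => /andP[].
      set I' := [seq j <- I | j != i0].
      have szI' : size I <= (size I').+1.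
        apply: size_filter_ge; apply: count_le1; first exact: (I_uniq Iv).
        by move=> i j _ _ ij /= /negPn/eqP ei /negPn/eqP ej; rewrite ei ej eqxx in ij.
      have [S HS] : exists S, M.-1 < count (fun j => cls Hf i0 C A j == S) I'.
        apply: (pigeon (R := C i0)).
          by move=> j; rewrite mem_filter => /andP[_ jI]; exact: clsR.
        have h1 : 2 ^ #|C i0| * M.-1 <= 2 ^ k * M.-1 by rewrite leq_mul2r p2 orbT.
        apply: (leq_ltn_trans h1).
        have e : 2 ^ k * M.-1 + 2 ^ k = 2 ^ k * M by rewrite -mulnSr prednK.
        have c0 : 0 < 2 ^ k by rewrite expn_gt0.
        move: HM; rewrite -e; move: (2 ^ k * M.-1) (2 ^ k) c0 => a c c0 HM'.
        move: (c * M.-1) HM' => b HM'; have h := leq_trans HM' szI'.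
        rewrite ltnS in h; apply: leq_trans h; by rewrite -addn1 leq_add2l.
      have : has (fun j => cls Hf i0 C A j == S) I' by rewrite has_count; lia.
      case/hasP => j0; rewrite mem_filter => /andP[j0i0 j0I] /eqP cj0.
      have SR : S \subset C i0 by rewrite -cj0; exact: clsR.
      pose A' := A :|: S.
      have A'V : A' \subset tV t by rewrite subUset AV' (subset_trans SR (I_sub Iv i0I)).
      have clsA' j : j \in I -> j != i0 -> cls Hf i0 C A' j = cls Hf i0 C A j.
        move=> jI ji; rewrite /cls (negbTE ji) setIUl.
        have -> : S :&: C j = set0.
          apply/eqP; rewrite setI_eq0; apply: disjointWl SR _.
          by apply: (I_dis Iv i0I jI); rewrite eq_sym.
        by rewrite setU0.
      have clsi0 : cls Hf i0 C A' i0 = S.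
        rewrite /cls eqxx setIUl (setIidPl SR).
        have -> : A :&: C i0 = set0.
          apply/setP=> y; rewrite !inE; case yA: (y \in A); rewrite ?andbT ?andbF //.
          exact/negbTE/Ai0.
        by rewrite set0U.
      pose J := i0 :: [seq j <- I' | cls Hf i0 C A j == S].
      have JI : {subset J <= I}.
        by move=> j; rewrite inE !mem_filter => /orP[/eqP->//|/andP[_ /andP[]]].
      have UJ : uniq J.
        rewrite /= !mem_filter eqxx /= andbF /=.
        exact: filter_uniq (filter_uniq _ (I_uniq Iv)).
      have clsJ j : j \in J -> cls Hf i0 C A' j = S.
        rewrite inE => /orP[/eqP->|]; first exact: clsi0.
        by rewrite !mem_filter => /andP[/eqP cj /andP[ji jI]]; rewrite clsA'.
      have IvJ : Inv k (set_color t X A') C J.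
        apply: Inv_color => //; first exact: (Inv_sub Iv UJ JI).
        move=> i i' iJ i'J ii'; apply: (cls_st X Iv i0I HfP A'V (JI _ iJ) (JI _ i'J) ii').
        by rewrite !clsJ.
      have szJ : M < size J by rewrite /= size_filter ltnS -(prednK Mpos).
      apply/satS; split => //; exists A' => //.
      apply/(key A' A'V J i0 IvJ (mem_head _ _) szJ).
      rewrite delete_color.
      have -> : A' :\: C i0 = A.
        rewrite setDUl.
        have -> : S :\: C i0 = set0 by apply/eqP; rewrite setD_eq0.
        rewrite setU0; apply/setP=> y; rewrite inE; case yA: (y \in A); rewrite ?andbF ?andbT //.
        exact: Ai0.
      exact: HA.
-
  have E := IH q Hs Hp t C I i0 Iv i0I Hsz.
  by rewrite !satN; split=> H1 H2; apply: H1; apply/E.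
Qed.

End H.

Unset Implicit Arguments.

Theorem lemma14 (T : finType) (t : triplet T) (k q1 q2 : nat)
  (C : nat -> {set T}) (phi : mso) :
  wf_triplet t ->
  wf_triplet (delete t (C 0)) ->
  (forall i, i < 2 ^ (k * q2) * q1 + 1 -> C i \subset tV t) ->
  (forall i, i < 2 ^ (k * q2) * q1 + 1 -> #|C i| <= k) ->
  (forall i j, i < 2 ^ (k * q2) * q1 + 1 -> j < 2 ^ (k * q2) * q1 + 1 ->
     i != j -> [disjoint C i & C j]) ->
  (forall i j, i < 2 ^ (k * q2) * q1 + 1 -> j < 2 ^ (k * q2) * q1 + 1 ->
     i != j -> same_type t (C i) (C j)) ->
  prenex phi -> countV phi = q1 -> countS phi = q2 ->
  (sat t phi <-> sat (delete t (C 0)) phi).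
Proof.
move=> [_ [_ [W3 W4]]] [_ [_ [D3 _]]] Hsub Hcard Hdis Hst Hp HV HS.
set N := 2 ^ (k * q2) * q1 + 1 in Hsub Hcard Hdis Hst.
have N0 : 0 < N by rewrite /N addn1.
have W : wfl t by split.
case: (posnP k) => [k0|kpos].
  have C0 : C 0 = set0 by have := Hcard 0 N0; rewrite k0 leqn0 => /eqP; exact: cards0_eq.
  rewrite C0; apply: (sat_iso _ (f := id)) => //.
  split=> /=.
  - by rewrite setD0 imset_id.
  - by move=> x y _ _.
  - by [].
  - by move=> i; case: (tl t i).
  - by move=> i; case: (tc t i) => //= S; rewrite setD0 imset_id.
have memI i : (i \in iota 0 N) = (i < N) by rewrite mem_iota.
have Iv : Inv k t C (iota 0 N).
  split.
  - exact: iota_uniq.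
  - by move=> i; rewrite memI; apply: Hsub.
  - by move=> i; rewrite memI; apply: Hcard.
  - by move=> i j; rewrite !memI; apply: Hdis.
  - by move=> i j; rewrite !memI; apply: Hst.
  - move=> i x v; rewrite memI => iN E.
    have v0 : v \notin C 0 by have := D3 _ _ E; rewrite inE => /andP[].
    case: (eqVneq i 0) => [->//|i0].
    have [f [[_ _ _ F4 _] _ H2 _]] := Hst 0 i N0 iN (negbT (introF eqP (fun e => negP i0 (introT eqP (esym e))))).
    apply/negP => vi; have := H2 _ vi; have := F4 x; rewrite E /= => -[->].
    by rewrite (negbTE v0).
  - exact: W.
apply: (core kpos (leqnn (msize phi)) Hp Iv).
- by rewrite memI.
- by rewrite size_iota HV HS /N addn1 ltnS.
Qed.
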